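(* Let $G=(V,E)$ be a finite directed acyclic graph with $V=\{v_1,\dots,v_n\}$, $G'=(V,E')$ its minimum equivalent graph, $B$ the associated bipartite graph, and $M$ a maximum matching of $B$ (a matching of largest cardinality). Then $\Phi(M)$ satisfies maximum logical concurrency on $G$, and among all stream assignments $f:V\to S$ satisfying maximum logical concurrency on $G$, $\Phi(M)$ attains the minimum value of $\mathrm{min}_{sync}(G,f)$.
   Context: A path from $u$ to $v$ in a directed graph is a nonempty sequence of edges $(u,w_1),\dots,(w_k,v)$ of that graph. The minimum equivalent graph (MEG) of a finite DAG $G=(V,E)$ is the subgraph $G'=(V,E')$, $E'\subseteq E$, with the same vertex set and the smallest number of edges among subgraphs having the same reachability relation as $G$. The bipartite graph $B=(V_1,V_2,E_B)$ has $V_1=\{x_1,\dots,x_n\}$, $V_2=\{y_1,\dots,y_n\}$ and $E_B=\{(x_i,y_j) : (v_i,v_j)\in E'\}$; a matching is a set of edges of $E_B$ no two sharing an endpoint. Let $S=\{s_1,\dots,s_n\}$ be a set of streams; a stream assignment is a function $f:V\to S$. It satisfies maximum logical concurrency on $G$ if for all distinct $u,v\in V$ with no path between them in either direction in $G$, $f(u)\neq f(v)$. For a matching $m$, $\Phi(m)$ is the stream assignment obtained by starting from the partition $\{\{v_1\},\dots,\{v_n\}\}$, merging, for each $(x_i,y_j)\in m$, the blocks containing $v_i$ and $v_j$, and assigning two vertices the same stream iff they lie in the same block. A synchronization plan $\Lambda\subseteq E$ is safe for $f$ on $G$ if for every edge $(u,v)\in E$, either $f(u)=f(v)$ or there is a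 path $P\subseteq E$ from $u$ to $v$ with $P\cap\Lambda\neq\emptyset$; $\mathrm{min}_{sync}(G,f)=\min\{|\Lambda| : \Lambda\subseteq E \text{ safe for } f \text{ on } G\}$. *)

(* Defs.v *)
From mathcomp Require Import all_boot all_order.
Set Implicit Arguments. Unset Strict Implicit. Unset Printing Implicit Defensive.

Section Defs.
Variable n : nat.
Notation V := 'I_n.
Notation edges := {set V * V}.

Definition erel (E : edges) : rel V := fun u v => (u, v) \in E.

Definition reach (E : edges) (u v : V) : bool :=
  [exists w, erel E u w && connect (erel E) w v].

Definition dag (E : edges) : Prop := forall v, ~~ reach E v v.

Definition is_MEG (E E' : edges) : Prop :=
  [/\ E' \subset E,
      (forall u v, reach E' u v = reach E u v) &
      (forall E'' : edges, E'' \subset E ->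
         (forall u v, reach E'' u v = reach E u v) -> #|E'| <= #|E''|)].

(* Bipartite graph B = (V1, V2, E_B): the pair (i, j) stands for the edge
   (x_i, y_j), which is in E_B iff (v_i, v_j) \in E'.  Thus E_B is represented
   by E' itself, and two edges of B share an endpoint iff they have the same
   first component (same x_i) or the same second component (same y_j). *)
Definition bip_edges (E' : edges) : edges := E'.

Definition is_matching (E' m : edges) : Prop :=
  m \subset bip_edges E' /\
  (forall e1 e2, e1 \in m -> e2 \in m -> e1 != e2 ->
     (e1.1 != e2.1) && (e1.2 != e2.2)).

Definition is_max_matching (E' M : edges) : Prop :=
  is_matching E' M /\ (forall m, is_matching E' m -> #|m| <= #|M|).

(* Streams S = {s_1..s_n} are represented by 'I_n. *)
Definition stream_assignment := V -> V.

(* Phi(m): the blocks obtained by merging v_i and v_j for each (x_i,y_j) in m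
   are the equivalence classes of the reflexive-symmetric-transitive closure
   of the relation {(v_i,v_j) | (x_i,y_j) \in m}; each vertex is assigned the
   stream indexed by the canonical representative (root) of its block. *)
Definition mrel (m : edges) : rel V :=
  fun u v => ((u, v) \in m) || ((v, u) \in m).

Definition Phi (m : edges) : stream_assignment := fun v => root (mrel m) v.

Definition MLC (E : edges) (f : stream_assignment) : Prop :=
  forall u v : V, u != v -> ~~ reach E u v -> ~~ reach E v u -> f u != f v.

(* A path from u to v in E contains an edge (a,b) of Lambda iff
   u reaches a (possibly u = a), (a,b) \in E, and b reaches v (possibly b = v). *)
Definition safe (E : edges) (f : stream_assignment) (L : edges) : bool :=
  (L \subset E) &&
  [forall e in E,
     (f e.1 == f e.2) ||
     [exists x in L, [&& x \in E, connect (erel E) e.1 x.1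
                         & connect (erel E) x.2 e.2]]].

(* min_sync(G,f) = min { |L| : L safe }.  E itself is always safe and every
   safe L has |L| <= |E|, so #|E| is a harmless initial value for the min. *)
Definition min_sync (E : edges) (f : stream_assignment) : nat :=
  \big[minn/#|E|]_(L : edges | safe E f L) #|L|.

End Defs.

(* Main.v *)
Require Import Defs.
From mathcomp Require Import all_boot all_order.
From mathcomp Require Import zify.
Set Implicit Arguments. Unset Strict Implicit. Unset Printing Implicit Defensive.

Section S.
Variable n : nat.
Notation V := 'I_n.
Implicit Types E : {set V * V}.

Lemma reach_conn E x y : reach E x y -> connect (erel E) x y.
Proof. by case/existsP=> w /andP[h1 h2]; apply: connect_trans (connect1 h1) h2. Qed.

Lemma conn_reach E x y : connect (erel E) x y -> x = y \/ reach E x y.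
Proof.
case/connectP=> [[|w p]] /= => [_ -> | /andP[h1 h2] ->]; first by left.
right; apply/existsP; exists w; rewrite h1 /=; apply/connectP; by exists p.
Qed.

Lemma reach_conn_trans E x y z : reach E x y -> connect (erel E) y z -> reach E x z.
Proof.
case/existsP=> w /andP[h1 h2] h3; apply/existsP; exists w.
by rewrite h1 (connect_trans h2 h3).
Qed.

Lemma conn_reach_trans E x y z : connect (erel E) x y -> reach E y z -> reach E x z.
Proof.
case/conn_reach=> [->//|h1 h2]; apply: reach_conn_trans h1 (reach_conn h2).
Qed.

Lemma edge_reach E x y : (x, y) \in E -> reach E x y.
Proof. by move=> h; apply/existsP; exists y; rewrite /erel h connect0. Qed.

Lemma conn_split (T : finType) (e : rel T) (u v x y : T) :
  connect e x y ->
  connect (fun a b => e a b && ((a, b) != (u, v))) x y \/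
  (connect e x u /\ connect e v y).
Proof.
case/connectP=> p; elim: p x => [|w p IH] x /=; first by move=> _ ->; left.
case/andP=> exw pw ey; case: (IH w pw ey) => [h|[h1 h2]].
- case: (boolP ((x, w) == (u, v))) => [/eqP[ex ew]|ne].
    subst; right; split; first exact: connect0.
    by apply: connect_sub h => a b /andP[h _]; apply: connect1.
  left; apply: connect_trans h; apply: connect1; by rewrite exw ne.
- right; split => //; exact: connect_trans (connect1 exw) h1.
Qed.

Lemma MEG_reduced E E' u v w : dag E -> is_MEG E E' -> (u, v) \in E' ->
  reach E u w -> reach E w v -> False.
Proof.
move=> dE [sub req mn] uvE.
rewrite -!req => ruw rwv.
have dE' : forall x, ~~ reach E' x x by move=> x; rewrite req; exact: dE.
set E'' := E' :\ (u, v).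
have eq'' : erel E'' =2 (fun a b => erel E' a b && ((a, b) != (u, v))).
  by move=> a b; rewrite /erel in_setD1 andbC.
have r'' : reach E'' u v.
  case/existsP: ruw => w1 /andP[uw1 w1w].
  have w1v : connect (erel E') w1 v := connect_trans w1w (reach_conn rwv).
  have nw1 : w1 != v.
    apply/negP => /eqP ew; subst w1.
    by move: (dE' w); rewrite (reach_conn_trans rwv w1w).
  case: (conn_split u v w1v) => [h|[h1 _]].
    apply/existsP; exists w1; rewrite eq'' uw1 /=.
    rewrite xpair_eqE negb_and nw1 orbT /=.
    by rewrite (eq_connect eq'').
  by move: (dE' u); rewrite (reach_conn_trans (edge_reach uw1) h1).
have sub'' : {subset E'' <= E'} by move=> z; rewrite in_setD1 => /andP[].
have c'' : forall a b, connect (erel E') a b -> connect (erel E'') a b.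
  apply: connect_sub => a b ab.
  case: (boolP ((a, b) == (u, v))) => [/eqP[-> ->]|ne]; first exact: reach_conn.
  by apply: connect1; rewrite eq'' ab ne.
have req'' : forall a b, reach E'' a b = reach E a b.
  move=> a b; rewrite -req; apply/idP/idP.
    case/existsP=> w1 /andP[h1 h2]; apply/existsP; exists w1.
    rewrite /erel (sub'' _ h1) /=; apply: connect_sub h2 => x y h.
    by apply: connect1; apply: sub''.
  case/existsP=> w1 /andP[h1 h2].
  case: (boolP ((a, w1) == (u, v))) => [/eqP[ea ew]|ne].
    by subst; exact: reach_conn_trans r'' (c'' _ _ h2).
  apply/existsP; exists w1; by rewrite eq'' h1 ne (c'' _ _ h2).
have := mn E'' (subset_trans (subsetDl _ _) sub) req''.
by rewrite (cardsD1 (u, v) E') uvE ltnn.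
Qed.

Lemma MEG_cover E E' u v a b : dag E -> is_MEG E E' -> (u, v) \in E' ->
  connect (erel E) u a -> (a, b) \in E -> connect (erel E) b v -> a = u /\ b = v.
Proof.
move=> dE mE uv ua ab bv.
case: (conn_reach ua) => [eua|rua].
  subst a; split => //; case: (conn_reach bv) => // rbv.
  by case: (MEG_reduced dE mE uv (edge_reach ab) rbv).
by case: (MEG_reduced dE mE uv rua (reach_conn_trans (edge_reach ab) bv)).
Qed.

Definition Pf (f : stream_assignment n) : {set V * V} := [set e | f e.1 == f e.2].

Lemma cross_path (T : finType) (e : rel T) (f : T -> V) x y :
  connect e x y -> f x != f y ->
  exists a b, [/\ e a b, f a != f b, connect e x a & connect e b y].
Proof.
case/connectP=> p; elim: p x => [|w p IH] x /=; first by move=> _ -> /eqP.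
case/andP=> exw pw ey nf.
case: (boolP (f x == f w)) => [/eqP fxw|nxw].
  have [a [b [h1 h2 h3 h4]]] := IH w pw ey ltac:(by rewrite -fxw).
  by exists a, b; split => //; exact: connect_trans (connect1 exw) h3.
exists x, w; split; [exact: exw|exact: nxw|exact: connect0|].
by apply/connectP; exists p.
Qed.

Lemma cross_safe E E' f : is_MEG E E' -> safe E f (E' :\: Pf f).
Proof.
move=> [sub req _]; apply/andP; split.
  by apply: subset_trans sub; apply: subsetDl.
apply/forall_inP => [[u v]] /= uvE; apply/orP.
case: (boolP (f u == f v)) => [_|nf]; [by left|right].
have : reach E' u v by rewrite req; exact: edge_reach.
move/reach_conn => c.
have [a [b [h1 h2 h3 h4]]] := cross_path c nf.
move: h1; rewrite /erel => h1.
apply/existsP; exists (a, b); rewrite !inE /= h2 h1 /=.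
have ss : forall x y, connect (erel E') x y -> connect (erel E) x y.
  apply: connect_sub => x y xy; apply: connect1; exact: (subsetP sub).
by rewrite (subsetP sub _ h1) (ss _ _ h3) (ss _ _ h4).
Qed.

Lemma cross_sub_safe E E' f L : dag E -> is_MEG E E' -> safe E f L ->
  E' :\: Pf f \subset L.
Proof.
move=> dE mE /andP[_ /forall_inP H]; apply/subsetP => [[u v]].
rewrite !inE /= => /andP[nf uv].
have uvE : (u, v) \in E by case: mE => sub _ _; exact: (subsetP sub).
case/orP: (H _ uvE) => /=; first by rewrite (negbTE nf).
case/exists_inP => [[a b]] xL /and3P[/= abE h1 h2].
by case: (MEG_cover dE mE uv h1 abE h2) => ea eb; subst.
Qed.

Lemma min_sync_lb E f k : (k <= #|E|) -> (forall L, safe E f L -> k <= #|L|) ->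
  k <= min_sync E f.
Proof.
move=> h1 h2; rewrite /min_sync.
by apply: (big_ind (fun x => k <= x)) => // x y hx hy; rewrite leq_min hx hy.
Qed.

Lemma min_sync_ub E f L : safe E f L -> min_sync E f <= #|L|.
Proof.
move=> h; rewrite /min_sync.
have : L \in index_enum {set V * V} by rewrite mem_index_enum.
elim: (index_enum _) => [//|a r IH]; rewrite big_cons inE.
case/orP=> [/eqP <-|hr]; first by rewrite h geq_minl.
case: (safe E f a) => //=; last exact: IH. by apply: leq_trans (IH hr); rewrite geq_minr.
Qed.

Lemma min_sync_eq E E' f : dag E -> is_MEG E E' -> min_sync E f = #|E' :\: Pf f|.
Proof.
move=> dE mE; apply/eqP; rewrite eqn_leq min_sync_ub ?(cross_safe _ mE) //=.
apply: min_sync_lb.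
  apply: subset_leq_card; case: mE => sub _ _; apply: subset_trans sub.
  exact: subsetDl.
by move=> L hL; apply: subset_leq_card; apply: cross_sub_safe hL.
Qed.

Lemma same_matching E E' f : dag E -> is_MEG E E' -> MLC E f ->
  is_matching E' (E' :&: Pf f).
Proof.
move=> dE mE hf; split; first by apply: subsetIl.
have cmp : forall x y, x != y -> f x == f y -> reach E x y || reach E y x.
  move=> x y nxy fxy; apply/negPn/negP; rewrite negb_or => /andP[h1 h2].
  by move: (hf x y nxy h1 h2); rewrite fxy.
have sub : {subset E' <= E} by case: mE => s _ _; apply/subsetP.
move=> [u v] [w z]; rewrite !inE /= => /andP[uv fuv] /andP[wz fwz] ne.
apply/andP; split; apply/negP => /eqP eq; subst.
- have nvz : v != z by apply: contraNneq ne => ->.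
  case/orP: (cmp v z nvz ltac:(by rewrite -(eqP fuv) (eqP fwz))) => r.
    exact: (MEG_reduced dE mE wz (edge_reach (sub _ uv)) r).
  exact: (MEG_reduced dE mE uv (edge_reach (sub _ wz)) r).
- have nuw : u != w by apply: contraNneq ne => ->.
  case/orP: (cmp u w nuw ltac:(by rewrite (eqP fuv) (eqP fwz))) => r.
    exact: (MEG_reduced dE mE uv r (edge_reach (sub _ wz))).
  exact: (MEG_reduced dE mE wz r (edge_reach (sub _ uv))).
Qed.

Lemma mrel_sym (M : {set V * V}) : symmetric (mrel M).
Proof. by move=> x y; rewrite /mrel orbC. Qed.

Lemma M_same E' M : E' :&: Pf (Phi M) \subset E' -> M \subset E' ->
  M \subset E' :&: Pf (Phi M).
Proof.
move=> _ sM; apply/subsetP => [[u v]] uv; rewrite !inE /= (subsetP sM _ uv) /=.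
rewrite /Phi root_connect; last exact: sym_connect_sym (@mrel_sym M).
by apply: connect1; rewrite /mrel uv.
Qed.

Lemma chain_path E M x p : is_matching E M -> M \subset E ->
  path (mrel M) x p -> uniq (x :: p) -> p != [::] ->
  ((x, head x p) \in M /\ reach E x (last x p)) \/
  ((head x p, x) \in M /\ reach E (last x p) x).
Proof.
move=> [_ hm] sM; elim: p x => [|y q IH] x //= /andP[xy pq] /andP[nx uq] _.
have er : forall a b, (a, b) \in M -> reach E a b.
  by move=> a b h; apply: edge_reach; apply: (subsetP sM).
case: q IH pq uq nx => [|z q] IH pq uq nx.
  by case/orP: xy => h; [left|right]; split => //=; exact: er.
have := IH y pq uq isT => /= -[[yz r]|[zy r]].
- case/orP: xy => h.
    left; split => //; apply: reach_conn_trans (er _ _ h) (reach_conn r).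
  exfalso; have ne : (y, x) != (y, z).
    by apply: contraNneq nx => -[->]; rewrite !inE eqxx orbT.
  by move: (hm _ _ h yz ne); rewrite /= eqxx.
- case/orP: xy => h.
    exfalso; have ne : (x, y) != (z, y).
      by apply: contraNneq nx => -[->]; rewrite !inE eqxx orbT.
    by move: (hm _ _ h zy ne); rewrite /= eqxx andbF.
  right; split => //; apply: reach_conn_trans r (reach_conn (er _ _ h)).
Qed.

Lemma Phi_MLC E E' M : is_MEG E E' -> is_matching E' M -> MLC E (Phi M).
Proof.
move=> [sub _ _] hm u v nuv r1 r2; apply/negP.
rewrite /Phi root_connect; last exact: sym_connect_sym (@mrel_sym M).
have sM : M \subset E by apply: subset_trans sub; case: hm.
have hmE : is_matching E M.
  by case: hm => _ h; split => //.
case/connectP=> p pp ev; subst v; move: nuv r1 r2.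
case: (shortenP pp) => p' pp' up' _ nuv r1 r2.
have np : p' != [::] by apply: contraNneq nuv => ->.
case: (chain_path hmE sM pp' up' np) => [[_ r]|[_ r]].
  by rewrite r in r1.
by rewrite r in r2.
Qed.

End S.

Theorem theorem4 (n : nat) (E E' M : {set 'I_n * 'I_n}) :
  dag E -> is_MEG E E' -> is_max_matching E' M ->
  MLC E (Phi M) /\
  (forall f : stream_assignment n, MLC E f -> min_sync E (Phi M) <= min_sync E f).
Proof.
move=> dE mE [mM maxM].
have sM : M \subset E' by case: mM.
split; first exact: Phi_MLC mE mM.
move=> f hf.
rewrite !(min_sync_eq _ dE mE).
have c1 := cardsID (Pf (Phi M)) E'.
have c2 := cardsID (Pf f) E'.
have h1 : #|M| <= #|E' :&: Pf (Phi M)|.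
  by apply: subset_leq_card; apply: M_same => //; apply: subsetIl.
have h2 : #|E' :&: Pf f| <= #|M| by apply: maxM; apply: same_matching.
lia.
Qed.
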